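(* For every integer $\nu\ge0$, $$\operatorname{sech}^3(D/2)\,0^{[2\nu]}=2\tanh(D/2)\,0^{[2\nu+1]}=4\cosh(D/2)\,0^{[2\nu+2]},$$ and consequently $$4\sum_{k=1}^{\nu+1}2^{-2k}\,t(2\nu+2,2k)=\frac{(2\nu)!}{2^{2\nu}}\binom{-3/2}{\nu}.$$
   Context: Central factorials: $x^{[0]}=1$, $x^{[n]}=x\prod_{j=1}^{n-1}(x+\tfrac n2-j)$ for $n\ge1$; $t(n,k)$ is defined by $x^{[n]}=\sum_k t(n,k)x^k$. For a power series $h(D)=\sum_k h_kD^k$ (here the Taylor series at $0$ of the indicated functions of $D$), $h(D)\,0^{[n]}:=\sum_k h_k\,k!\,t(n,k)$. *)

(* Defs.v *)
From HB Require Import structures.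
From mathcomp Require Import all_boot all_order all_algebra.
Set Implicit Arguments. Unset Strict Implicit. Unset Printing Implicit Defensive.
Import Order.TTheory GRing.Theory Num.Theory.
Local Open Scope ring_scope.

Definition cfac (n : nat) : {poly rat} :=
  if n is 0 then 1
  else 'X * \prod_(1 <= j < n) ('X + (n%:R / 2 - j%:R)%:P).

Definition tcf (n k : nat) : rat := (cfac n)`_k.

(* A formal power series in D is given by its coefficient sequence. *)
Definition series := nat -> rat.

(* h(D) 0^{[n]} := sum_k h_k k! t(n,k)   (t(n,k) = 0 for k >= size (cfac n)) *)
Definition opApply (h : series) (n : nat) : rat :=
  \sum_(k < size (cfac n)) h k * (k`!)%:R * tcf n k.

Definition smul (a b : series) : series :=
  fun n => \sum_(i < n.+1) a i * b (n - i)%N.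

Fixpoint sinv_seq (a : series) (n : nat) : seq rat :=
  match n with
  | 0 => [:: (a 0%N)^-1]
  | m.+1 => let s := sinv_seq a m in
            rcons s (- (a 0%N)^-1 *
                     \sum_(i < m.+1) a i.+1 * nth 0 s (m - i)%N)
  end.
Definition sinv (a : series) : series := fun n => nth 0 (sinv_seq a n) n.

Definition cosh_half : series :=
  fun k => if odd k then 0 else ((2 ^ k * k`!)%N%:R)^-1.
Definition sinh_half : series :=
  fun k => if odd k then ((2 ^ k * k`!)%N%:R)^-1 else 0.

Definition sech_half : series := sinv cosh_half.
Definition tanh_half : series := smul sinh_half sech_half.
Definition sech3_half : series := smul sech_half (smul sech_half sech_half).

Definition gbinom (a : rat) (n : nat) : rat :=
  (\prod_(i < n) (a - i%:R)) / (n`!)%:R.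

(* Main.v *)
Require Import Defs.
From HB Require Import structures.
From mathcomp Require Import all_boot all_order all_algebra.
From mathcomp Require Import ring zify.
Import Order.TTheory GRing.Theory Num.Theory.
Local Open Scope ring_scope.

Definition LN (N : nat) (h : series) (p : {poly rat}) : rat :=
  \sum_(k < N) h k * (k`!)%:R * p`_k.
Definition AN (N : nat) (a : series) (p : {poly rat}) : {poly rat} :=
  \sum_(j < N) a j *: p^`(j).

Lemma LN_opApply N h n : (size (cfac n) <= N)%N -> LN N h (cfac n) = opApply h n.
Proof.
move=> hs; rewrite /LN /opApply [RHS](big_ord_widen N (fun k => h k * (k`!)%:R * tcf n k)) //.
rewrite [RHS]big_mkcond /=; apply: eq_bigr => k _; case: ifP => // /negbT.
by rewrite -leqNgt => hk; rewrite /tcf nth_default // mulr0.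
Qed.

Lemma LND N h p q : LN N h (p + q) = LN N h p + LN N h q.
Proof. by rewrite /LN -big_split; apply: eq_bigr => k _; rewrite coefD mulrDr. Qed.

Lemma LNZ N h c p : LN N h (c *: p) = c * LN N h p.
Proof. by rewrite /LN big_distrr; apply: eq_bigr => k _; rewrite coefZ /= mulrCA. Qed.

Lemma LN_sum N h M (c : nat -> rat) (F : nat -> {poly rat}) :
  LN N h (\sum_(i < M) c i *: F i) = \sum_(i < M) c i * LN N h (F i).
Proof.
elim: M => [|M IH]; first by rewrite !big_ord0 /LN big1 // => k _; rewrite coef0 mulr0.
by rewrite !big_ord_recr /= LND IH LNZ.
Qed.

Lemma AN_sum N a M (c : nat -> rat) (F : nat -> {poly rat}) :
  AN N a (\sum_(i < M) c i *: F i) = \sum_(i < M) c i *: AN N a (F i).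
Proof.
elim: M => [|M IH].
  by rewrite !big_ord0 /AN big1 // => k _; rewrite derivn_poly0 ?size_poly0 // scaler0.
rewrite !big_ord_recr /= -IH /AN scaler_sumr -big_split /=; apply: eq_bigr => j _.
by rewrite derivnD derivnZ scalerDr !scalerA mulrC.
Qed.

Lemma LN_Xn N h n : (n < N)%N -> LN N h 'X^n = h n * (n`!)%:R.
Proof.
move=> hn; rewrite /LN (bigD1 (Ordinal hn)) //= coefXn eqxx mulr1 big1 ?addr0 //.
move=> k /eqP hk; rewrite coefXn; case: eqP => [e|]; last by rewrite mulr0.
by exfalso; apply: hk; apply: val_inj.
Qed.

Lemma LN_AN_Xn N a h n : (n < N)%N ->
  LN N h (AN N a 'X^n) = smul a h n * (n`!)%:R.
Proof.
move=> hn; rewrite /AN.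
have -> : \sum_(j < N) a j *: ('X^n)^`(j) =
   \sum_(j < N) (a j * (n ^_ j)%:R) *: 'X^(n - j).
  by apply: eq_bigr => j _; rewrite derivnXn -scaler_nat scalerA.
rewrite (LN_sum N h N (fun j => a j * (n ^_ j)%:R) (fun j => 'X^(n - j))) /smul big_distrl /=.
rewrite (big_ord_widen N (fun i => a i * h (n - i)%N * (n`!)%:R)) // [RHS]big_mkcond /=.
apply: eq_bigr => j _; rewrite LN_Xn; last by apply: leq_ltn_trans (leq_subr _ _) hn.
case: ifP => hj.
  rewrite -(ffact_fact (m := j) (n := n)) // natrM; ring.
by rewrite ffact_small ?mulr0 ?mul0r // ltnNge -ltnS hj. Qed.

Lemma LN_smul N a h (p : {poly rat}) : (size p <= N)%N -> LN N (smul a h) p = LN N h (AN N a p).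
Proof.
move=> hs; rewrite -(coefK p) poly_def.
rewrite (LN_sum N (smul a h) (size p) (fun i => p`_i) (fun i => 'X^i)).
rewrite (AN_sum N a (size p) (fun i => p`_i) (fun i => 'X^i)).
rewrite (LN_sum N h (size p) (fun i => p`_i) (fun i => AN N a 'X^i)).
apply: eq_bigr => i _; rewrite LN_AN_Xn ?LN_Xn //; apply: leq_trans hs; exact: ltn_ord.
Qed.

Definition sder (h : series) : series := fun k => (k.+1)%:R * h k.+1.

Lemma LN_sder N h (p : {poly rat}) : LN N (sder h) p = LN N.+1 h ('X * p).
Proof.
rewrite /LN big_ord_recl coefXM eqxx mulr0 add0r; apply: eq_bigr => k _.
rewrite coefXM /= /sder factS natrM; ring.
Qed.

Lemma fact_neq0 (j : nat) : (j`!)%:R != 0 :> rat.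
Proof. by rewrite pnatr_eq0 -lt0n fact_gt0. Qed.

Lemma coef_half_term j (y : rat) :
  ((2 ^ j * j`!)%N%:R)^-1 * (y *+ j`!) = y * (1/2) ^+ j.
Proof.
rewrite natrM natrX -mulr_natr div1r exprVn.
have h1 := fact_neq0 j. have h2 : (2 ^+ j) != 0 :> rat by rewrite expf_neq0.
by field; rewrite h1 h2.
Qed.

Lemma AN_eval_split N a (p : {poly rat}) (x : rat) : (size p <= N)%N ->
  (AN N a p).[x] = \sum_(j < N) a j * ((p^`N(j)).[x] *+ j`!).
Proof.
move=> _; rewrite /AN horner_sum; apply: eq_bigr => j _.
by rewrite hornerZ nderivn_def hornerMn.
Qed.

Lemma AN_cosh_eval N (p : {poly rat}) (x : rat) : (size p <= N)%N ->
  (AN N cosh_half p).[x] = (p.[x + 1/2] + p.[x - 1/2]) / 2.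
Proof.
move=> hs; rewrite AN_eval_split //.
rewrite (nderiv_taylor_wide (x := x) (h := 1/2) (mulrC _ _) hs).
rewrite (nderiv_taylor_wide (x := x) (h := - (1/2)) (mulrC _ _) hs).
rewrite -big_split /= mulr_suml; apply: eq_bigr => j _.
rewrite /cosh_half exprNn -signr_odd; case: ifP => ho /=.
  by rewrite mul0r expr1; field.
by rewrite coef_half_term expr0; field.
Qed.

Lemma AN_sinh_eval N (p : {poly rat}) (x : rat) : (size p <= N)%N ->
  (AN N sinh_half p).[x] = (p.[x + 1/2] - p.[x - 1/2]) / 2.
Proof.
move=> hs; rewrite AN_eval_split //.
rewrite (nderiv_taylor_wide (x := x) (h := 1/2) (mulrC _ _) hs).
rewrite (nderiv_taylor_wide (x := x) (h := - (1/2)) (mulrC _ _) hs).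
rewrite -sumrB /= mulr_suml; apply: eq_bigr => j _.
rewrite /sinh_half exprNn -signr_odd; case: ifP => ho /=.
  by rewrite coef_half_term expr1; field.
by rewrite mul0r expr0; field.
Qed.

Definition Q (m : nat) (x : rat) : rat :=
  \prod_(i < m) (x + (m%:R - 1 - 2 * i%:R) / 2).

Lemma natS (n : nat) : (n.+1)%:R = n%:R + 1 :> rat.
Proof. by rewrite -addn1 natrD. Qed.

Lemma cfac_eval0 x : (cfac 0).[x] = 1.
Proof. by rewrite /= hornerC. Qed.

Lemma cfac_evalS m x : (cfac m.+1).[x] = x * Q m x.
Proof.
rewrite /cfac hornerM hornerX horner_prod big_add1 /= big_mkord /Q; congr (_ * _).
apply: eq_bigr => i _; rewrite hornerD hornerX hornerC ?natS; by field.
Qed.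

Lemma Q_up k x : Q k.+1 (x + 1/2) = (x + (k%:R + 1)/2) * Q k x.
Proof.
rewrite /Q big_ord_recl /= ?natS; congr (_ * _); first by field.
apply: eq_bigr => i _; rewrite /bump /= ?natS; by field.
Qed.

Lemma Q_dn k x : Q k.+1 (x - 1/2) = Q k x * (x - (k%:R + 1)/2).
Proof.
rewrite /Q big_ord_recr /= ?natS; congr (_ * _); last by field.
apply: eq_bigr => i _; rewrite ?natS; by field.
Qed.

Lemma Q_SS k x : Q k.+2 x = (x + (k%:R + 1)/2) * Q k x * (x - (k%:R + 1)/2).
Proof.
rewrite /Q big_ord_recl big_ord_recr /= -mulrA; congr (_ * (_ * _)).
- rewrite ?natS; by field.
- apply: eq_bigr => i _; rewrite /bump /= ?natS; by field.
- rewrite /bump /= ?natS; by field.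
Qed.

Lemma poly_eval_eq (p q : {poly rat}) : (forall x, p.[x] = q.[x]) -> p = q.
Proof.
move=> h; apply/eqP; rewrite -subr_eq0; apply/eqP.
apply: (roots_geq_poly_eq0 (rs := [seq i%:R | i <- iota 0 (size (p - q))])).
- apply/allP => y /mapP [i _ ->]; by rewrite /root hornerD hornerN h subrr.
- rewrite map_inj_uniq ?iota_uniq // => i j /eqP; rewrite eqr_nat => /eqP.
  done.
- by rewrite size_map size_iota.
Qed.

Lemma size_prod_XaddC (r : seq nat) (f : nat -> rat) :
  (size (\prod_(j <- r) ('X + (f j)%:P))%R <= (size r).+1)%N.
Proof.
elim: r => [|j r IH]; first by rewrite big_nil size_poly1.
rewrite big_cons /=; apply: leq_trans (size_mul_leq _ _) _.
by rewrite size_XaddC.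
Qed.

Lemma cfac_size n : (size (cfac n) <= n.+1)%N.
Proof.
case: n => [|m]; first by rewrite /= size_poly1.
rewrite /cfac; apply: leq_trans (size_mul_leq _ _) _.
rewrite size_polyX /=; apply: leq_trans (size_prod_XaddC _ _) _.
by rewrite size_iota subn1.
Qed.

Lemma AN_cosh_cfac N k : (k.+2 <= N)%N ->
  'X * AN N cosh_half (cfac k.+1) = cfac k.+2 + ((k%:R + 1) * k%:R / 4) *: cfac k.
Proof.
move=> hN; apply: poly_eval_eq => x.
rewrite hornerM hornerX AN_cosh_eval; last exact: leq_trans (cfac_size _) hN.
rewrite hornerD hornerZ !cfac_evalS.
case: k hN => [|j] hN.
  by rewrite cfac_eval0 /Q !big_ord0 big_ord1 /=; field.
rewrite Q_up Q_dn Q_SS cfac_evalS ?natS; by field.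
Qed.

Lemma AN_sinh_cfac N k : (k.+2 <= N)%N ->
  AN N sinh_half (cfac k.+1) = ((k%:R + 1) / 2) *: cfac k.
Proof.
move=> hN; apply: poly_eval_eq => x.
rewrite AN_sinh_eval; last exact: leq_trans (cfac_size _) hN.
rewrite hornerZ !cfac_evalS.
case: k hN => [|j] hN.
  by rewrite cfac_eval0 /Q !big_ord0; field.
rewrite Q_up Q_dn cfac_evalS ?natS; by field.
Qed.

Lemma size_sinv_seq a n : size (sinv_seq a n) = n.+1.
Proof. by elim: n => [|n IH] //=; rewrite size_rcons IH. Qed.

Lemma sinv_seq_prefix a n m i : (i <= n)%N -> (n <= m)%N ->
  nth 0 (sinv_seq a m) i = nth 0 (sinv_seq a n) i.
Proof.
move=> hi; elim: m => [|m IH] hm.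
  by move: hm; rewrite leqn0 => /eqP ->.
case: (ltngtP n m.+1) hm => // [hlt _|-> //].
rewrite /= nth_rcons size_sinv_seq (leq_ltn_trans hi hlt); exact: IH.
Qed.

Lemma sinvS a m : sinv a m.+1 =
  - (a 0%N)^-1 * \sum_(i < m.+1) a i.+1 * sinv a (m - i)%N.
Proof.
rewrite /sinv /= nth_rcons size_sinv_seq ltnn eqxx; congr (_ * _).
apply: eq_bigr => i _; congr (_ * _); rewrite /sinv.
apply: sinv_seq_prefix => //; exact: leq_subr.
Qed.

Lemma smul_sinv a k : a 0%N != 0 -> smul a (sinv a) k = (k == 0)%:R.
Proof.
move=> ha; case: k => [|m].
  by rewrite /smul big_ord1 /sinv /= mulfV.
rewrite /smul big_ord_recl /= subn0 sinvS mulrA mulrN mulfV // mulN1r.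
rewrite addrC; apply/eqP; rewrite subr_eq0; apply/eqP.
by apply: eq_bigr => i _; rewrite subSS.
Qed.

Lemma sder_cosh k : sder cosh_half k = sinh_half k / 2.
Proof.
rewrite /sder /cosh_half /sinh_half /=; case ho: (odd k) => /=.
  rewrite expnS factS !natrM.
  have h1 := fact_neq0 k. have h2 : (2 ^ k)%:R != 0 :> rat by rewrite pnatr_eq0 expn_eq0.
  have h3 : (k.+1)%:R != 0 :> rat by rewrite pnatr_eq0.
  by field; rewrite h1 h2 addrC -natS h3.
by rewrite mulr0 mul0r.
Qed.

Lemma sder_sinh k : sder sinh_half k = cosh_half k / 2.
Proof.
rewrite /sder /cosh_half /sinh_half /=; case ho: (odd k) => /=.
  by rewrite mulr0 mul0r.
rewrite expnS factS !natrM.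
have h1 := fact_neq0 k. have h2 : (2 ^ k)%:R != 0 :> rat by rewrite pnatr_eq0 expn_eq0.
have h3 : (k.+1)%:R != 0 :> rat by rewrite pnatr_eq0.
by field; rewrite h1 h2 addrC -natS h3.
Qed.

Definition agree N (a : series) (p : {poly rat}) := forall i, (i < N)%N -> a i = p`_i.
Definition low N (p : {poly rat}) := forall i, (i < N)%N -> p`_i = 0.

Lemma agree_pol N a : agree N a (\poly_(i < N) a i).
Proof. by move=> i hi; rewrite coef_poly hi. Qed.

Lemma agreeW N M a p : (M <= N)%N -> agree N a p -> agree M a p.
Proof. by move=> hMN h i hi; apply: h; exact: leq_trans hi hMN. Qed.

Lemma agree_smul N a b p q : agree N a p -> agree N b q -> agree N (smul a b) (p * q).
Proof.
move=> ha hb i hi; rewrite coefM /smul; apply: eq_bigr => j _.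
have hj : (j < N)%N by apply: leq_ltn_trans hi; rewrite -ltnS.
rewrite ha // hb //; apply: leq_ltn_trans hi; exact: leq_subr.
Qed.

Lemma agree_sder N a p : agree N.+1 a p -> agree N (sder a) p^`().
Proof. by move=> ha i hi; rewrite /sder coef_deriv ha // mulr_natl. Qed.

Lemma agree_scale N c a p : agree N a p -> agree N (fun k => c * a k) (c *: p).
Proof. by move=> ha i hi; rewrite coefZ ha. Qed.

Lemma agree_div2 N a p : agree N a p -> agree N (fun k => a k / 2) ((1/2) *: p).
Proof. by move=> ha i hi; rewrite coefZ ha // mulrC div1r. Qed.

Lemma agree_eq N a b p q : agree N a p -> agree N b q -> low N (p - q) ->
  forall i, (i < N)%N -> a i = b i.
Proof.
move=> ha hb hl i hi; rewrite ha // hb //; apply/eqP; rewrite -subr_eq0; apply/eqP.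
by rewrite -coefB hl.
Qed.

Lemma lowD N p q : low N p -> low N q -> low N (p + q).
Proof. by move=> hp hq i hi; rewrite coefD hp ?hq ?addr0. Qed.
Lemma lowN N p : low N p -> low N (- p).
Proof. by move=> hp i hi; rewrite coefN hp ?oppr0. Qed.
Lemma lowMl N p q : low N p -> low N (q * p).
Proof.
move=> hp i hi; rewrite coefM big1 // => j _; rewrite hp ?mulr0 //.
by apply: leq_ltn_trans hi; exact: leq_subr.
Qed.
Lemma lowMr N p q : low N p -> low N (p * q).
Proof. by move=> hp; rewrite mulrC; exact: lowMl. Qed.
Lemma lowZ N c p : low N p -> low N (c *: p).
Proof. by move=> hp i hi; rewrite coefZ hp ?mulr0. Qed.
Lemma low_deriv N p : low N.+1 p -> low N p^`().
Proof. by move=> hp i hi; rewrite coef_deriv hp // mul0rn. Qed.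
Lemma lowW N M p : (M <= N)%N -> low N p -> low M p.
Proof. by move=> hMN h i hi; apply: h; exact: leq_trans hi hMN. Qed.
Lemma low_agree N a p q : agree N a p -> agree N a q -> low N (p - q).
Proof. by move=> hp hq i hi; rewrite coefB -hp // -hq // subrr. Qed.
Lemma low_eq N p q : p = q -> low N (p - q).
Proof. by move=> ->; rewrite subrr => i _; rewrite coef0. Qed.

Lemma deriv_one : (1 : {poly rat})^`() = 0.
Proof. by rewrite -polyC1 derivC. Qed.

Lemma cosh0 : cosh_half 0%N = 1.
Proof. by rewrite /cosh_half /= invr1. Qed.

Lemma alg1 (C S E : {poly rat}) :
  C * E^`() + (1/2)%:P * (S * E) =
  (C * E - 1)^`() - (C^`() - (1/2)%:P * S) * E.
Proof. rewrite derivB derivM deriv_one. ring. Qed.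

Lemma alg2 (C S E : {poly rat}) :
  C * E^`() - (-(1/2)) *: (S * E) = C * E^`() + (1/2)%:P * (S * E).
Proof. rewrite -mul_polyC. ring. Qed.

Lemma alg3 (C S E : {poly rat}) :
  C * (E * (E * E))^`() - (-(3/2)) *: (S * (E * (E * E))) =
     (3%:R * (E * E)) * (C * E^`() + (1/2)%:P * (S * E)).
Proof. rewrite -mul_polyC !derivM. ring. Qed.

Lemma alg4 (C S : {poly rat}) :
  C * C^`() - (1/2) *: (S * C) = C * (C^`() - (1/2)%:P * S).
Proof. rewrite -mul_polyC. ring. Qed.

Section ODE.
Variables (k : nat) (C S E : {poly rat}).
Hypothesis hC : agree k.+2 cosh_half C.
Hypothesis hS : agree k.+2 sinh_half S.
Hypothesis hE : agree k.+2 sech_half E.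

Lemma hCE : low k.+2 (C * E - 1).
Proof.
apply: (@low_agree k.+2 (smul cosh_half sech_half)); first exact: agree_smul.
move=> i hi; rewrite smul_sinv ?cosh0 ?oner_neq0 // coef1 //.
Qed.

Lemma hCd : low k.+1 (C^`() - (1/2)%:P * S).
Proof.
apply: (@low_agree k.+1 (sder cosh_half)); first exact: agree_sder.
move=> i hi; rewrite sder_cosh mul_polyC coefZ hS; last exact: ltnW.
by rewrite mulrC div1r.
Qed.

Lemma hkey : low k.+1 (C * E^`() + (1/2)%:P * (S * E)).
Proof.
rewrite alg1; apply: lowD; first exact: low_deriv hCE.
by apply: lowN; apply: lowMr; exact: hCd.
Qed.

Lemma ode_e : smul cosh_half (sder sech_half) k = (-(1/2)) * smul sinh_half sech_half k.
Proof.
apply: (@agree_eq k.+1 (smul cosh_half (sder sech_half)) (fun j => (-(1/2)) * smul sinh_half sech_half j) (C * E^`()) ((-(1/2)) *: (S * E)) _ _ _ k (ltnSn k)).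
- apply: agree_smul; [exact: agreeW hC | exact: agree_sder].
- by apply: agree_scale; apply: agree_smul; exact: agreeW (leqnSn _) _.
- rewrite alg2; exact: hkey.
Qed.

Lemma ode_e3 : smul cosh_half (sder sech3_half) k = (-(3/2)) * smul sinh_half sech3_half k.
Proof.
have hE3 : agree k.+2 sech3_half (E * (E * E)) by apply: agree_smul => //; exact: agree_smul.
apply: (@agree_eq k.+1 (smul cosh_half (sder sech3_half)) (fun j => (-(3/2)) * smul sinh_half sech3_half j) (C * (E * (E * E))^`())
                 ((-(3/2)) *: (S * (E * (E * E)))) _ _ _ k (ltnSn k)).
- apply: agree_smul; [exact: agreeW hC | exact: agree_sder].
- by apply: agree_scale; apply: agree_smul; exact: agreeW (leqnSn _) _.
- rewrite alg3; apply: lowMl; exact: hkey.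
Qed.

Lemma ode_c : smul cosh_half (sder cosh_half) k = (1/2) * smul sinh_half cosh_half k.
Proof.
apply: (@agree_eq k.+1 (smul cosh_half (sder cosh_half)) (fun j => (1/2) * smul sinh_half cosh_half j) (C * C^`()) ((1/2) *: (S * C)) _ _ _ k (ltnSn k)).
- apply: agree_smul; [exact: agreeW hC | exact: agree_sder].
- by apply: agree_scale; apply: agree_smul; exact: agreeW (leqnSn _) _.
- rewrite alg4; apply: lowMl; exact: hCd.
Qed.
End ODE.

Lemma ode_e' k : smul cosh_half (sder sech_half) k = (-(1/2)) * smul sinh_half sech_half k.
Proof. exact: (@ode_e k _ _ _ (agree_pol _ _) (agree_pol _ _) (agree_pol _ _)). Qed.
Lemma ode_e3' k : smul cosh_half (sder sech3_half) k = (-(3/2)) * smul sinh_half sech3_half k.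
Proof. exact: (@ode_e3 k _ _ _ (agree_pol _ _) (agree_pol _ _) (agree_pol _ _)). Qed.
Lemma ode_c' k : smul cosh_half (sder cosh_half) k = (1/2) * smul sinh_half cosh_half k.
Proof. exact: (@ode_c k _ _ (agree_pol _ _) (agree_pol _ _)). Qed.

Lemma LN_sscale N (c : rat) g p : LN N (fun j => c * g j) p = c * LN N g p.
Proof. by rewrite /LN big_distrr; apply: eq_bigr => k _ /=; rewrite !mulrA. Qed.

Lemma rec h (al : rat) :
  (forall k, smul cosh_half (sder h) k = al * smul sinh_half h k) ->
  forall n, opApply h n.+2 + ((n%:R + 1) * n%:R / 4) * opApply h n
            = al * ((n%:R + 1) / 2) * opApply h n.
Proof.
move=> hyp n.
have e1 : LN n.+2 (smul cosh_half (sder h)) (cfac n.+1) =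
          LN n.+2 (fun j => al * smul sinh_half h j) (cfac n.+1).
  by apply: eq_bigr => k _; rewrite hyp.
rewrite LN_sscale !LN_smul ?cfac_size // LN_sder AN_cosh_cfac // AN_sinh_cfac // in e1.
rewrite LND LNZ LNZ !LN_opApply in e1; try by apply: leq_trans (cfac_size _) _.
by rewrite e1 mulrA.
all: by apply: leq_trans (cfac_size _) _; lia.
Qed.

Lemma opApply0 h : opApply h 0 = h 0%N.
Proof. by rewrite /opApply /tcf /= size_poly1 big_ord1 coef1 /= !mulr1. Qed.

Lemma sech0 : sech_half 0%N = 1.
Proof. by rewrite /sech_half /sinv /= cosh0 invr1. Qed.

Definition Av (nu : nat) : rat :=
  (((2 * nu)`!)%:R / 2 ^+ (2 * nu)) * gbinom (- (3%:R / 2)) nu.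

Lemma dbl (nu : nat) : (2 * nu.+1 = (2 * nu).+2)%N.
Proof. by rewrite mulnS. Qed.

Lemma gbinomS a n : gbinom a n.+1 = gbinom a n * (a - n%:R) / (n%:R + 1).
Proof.
rewrite /gbinom big_ord_recr /= factS natrM natS.
have h1 := fact_neq0 n. have h2 : n%:R + 1 != 0 :> rat by rewrite -natS pnatr_eq0.
by field; rewrite h1 h2.
Qed.

Lemma Av0 : Av 0 = 1.
Proof. by rewrite /Av /gbinom big_ord0 /= expr0 muln0 fact0 mulr1n divr1. Qed.

Lemma AvS nu : Av nu.+1 = Av nu * (- ((2 * nu%:R + 1) * (2 * nu%:R + 3)) / 4).
Proof.
rewrite /Av dbl gbinomS !factS !natrM !exprS.
rewrite [((2*nu).+2)%:R]natS [((2*nu).+1)%:R]natS natrM.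
have h1 := fact_neq0 (2 * nu). have h2 : nu%:R + 1 != 0 :> rat by rewrite -natS pnatr_eq0.
have h3 : (2 : rat) ^+ (2 * nu) != 0 by rewrite expf_neq0.
by field; rewrite h3 h2.
Qed.

Lemma natdbl (nu : nat) : ((2 * nu)%N%:R : rat) = 2 * nu%:R.
Proof. by rewrite natrM. Qed.

Lemma lin (x y a b : rat) : x + a * y = b * y -> x = (b - a) * y.
Proof. move=> e; rewrite mulrBl -e; ring. Qed.
Arguments lin {x y a b}.

Lemma I1 nu : opApply sech3_half (2 * nu)%N = Av nu.
Proof.
elim: nu => [|nu IH].
  by rewrite muln0 opApply0 Av0 /sech3_half /smul /= !big_ord1 sech0 !mulr1.
have e := @rec _ _ ode_e3' (2 * nu).
rewrite dbl (lin e) AvS -IH natdbl; by field.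
Qed.

Lemma I2 nu : (2 * nu%:R + 1) * opApply sech_half (2 * nu)%N = Av nu.
Proof.
elim: nu => [|nu IH].
  by rewrite muln0 opApply0 Av0 sech0 mulr1; ring.
have e := @rec _ _ ode_e' (2 * nu).
rewrite dbl (lin e) AvS -IH natdbl natS; by field.
Qed.

Lemma I3 nu : 4 * opApply cosh_half (2 * nu).+2 = Av nu.
Proof.
elim: nu => [|nu IH].
  have e := @rec _ _ ode_c' 0; rewrite muln0 (lin e) opApply0 cosh0 Av0; by field.
have e := @rec _ _ ode_c' (2 * nu).+2.
rewrite dbl (lin e) AvS -IH !natS natdbl; by field.
Qed.

Lemma tanh_lem nu : 2 * opApply tanh_half (2 * nu).+1 = (2 * nu%:R + 1) * opApply sech_half (2 * nu)%N.
Proof.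
rewrite -(@LN_opApply (2 * nu).+2) ?cfac_size // /tanh_half LN_smul ?cfac_size //.
rewrite AN_sinh_cfac // LNZ LN_opApply; last by apply: leq_trans (cfac_size _) _; lia.
rewrite natdbl; by field.
Qed.

Lemma sum_pairs (F : nat -> rat) m :
  \sum_(k < 2 * m) F k = \sum_(k < m) (F (2 * k)%N + F (2 * k).+1).
Proof.
elim: m => [|m IH]; first by rewrite muln0 !big_ord0.
by rewrite dbl !big_ord_recr /= IH addrA.
Qed.

Lemma tcf0 n : tcf n.+1 0 = 0.
Proof. by rewrite /tcf /cfac coefXM. Qed.

Lemma sum_lem nu :
  \sum_(1 <= k < nu.+2) (2 ^+ (2 * k))^-1 * tcf (2 * nu).+2 (2 * k)%N
  = opApply cosh_half (2 * nu).+2.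
Proof.
rewrite -(@LN_opApply (2 * nu.+2)); last by apply: leq_trans (cfac_size _) _; lia.
rewrite /LN (sum_pairs (fun k => cosh_half k * (k`!)%:R * (cfac (2*nu).+2)`_k)) big_ord_recl /= big_add1 /= big_mkord.
have h0 : (cfac (2*nu).+2)`_0 = 0 := tcf0 _.
have h1 : cosh_half 1 = 0 by [].
rewrite muln0 h0 h1 mulr0 mul0r !add0r.
apply: eq_bigr => k _; rewrite /bump leq0n add1n.
have ho : odd (2 * k.+1 + 1) by rewrite oddD oddM.
rewrite addn1 in ho.
have he : ~~ odd (2 * k.+1) by rewrite oddM.
rewrite /cosh_half ho (negbTE he) /tcf mul0r mul0r addr0.
congr (_ * _).
by rewrite natrM natrX invfM -mulrA mulVf ?fact_neq0 // mulr1.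
Qed.

Theorem mainTheorem7 (nu : nat) :
  opApply sech3_half (2 * nu)%N = 2 * opApply tanh_half (2 * nu).+1 /\
  2 * opApply tanh_half (2 * nu).+1 = 4 * opApply cosh_half (2 * nu).+2 /\
  4 * (\sum_(1 <= k < nu.+2) (2 ^+ (2 * k))^-1 * tcf (2 * nu).+2 (2 * k)%N)
    = (((2 * nu)`!)%:R / 2 ^+ (2 * nu)) * gbinom (- (3%:R / 2)) nu.
Proof.
rewrite tanh_lem I1 I2 I3 sum_lem I3; by [].
Qed.
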